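(* If $n$ is a non-negative integer, then $$\sum_{k = 1}^n \sum_{j = 0}^{k - 1} \frac{\binom{n}{j}^2}{k - j} = \binom{2n}{n} \left(2H_n - H_{2n} \right)$$ and $$\sum_{k = 1}^n \sum_{j = 0}^{k - 1} \frac{1}{k - j}\binom{n}{j}\binom{2n}{n + j} = \binom{3n}{n} H_n - \sum_{k = 1}^n \frac{1}{k}\binom{3n - k}{n - k}.$$
   Context: $H_n=\sum_{m=1}^n\frac1m$. Empty sums are zero. *)

(* Defs.v *)
From mathcomp Require Import all_boot all_algebra.
Set Implicit Arguments. Unset Strict Implicit. Unset Printing Implicit Defensive.
Import GRing.Theory Num.Theory.
Local Open Scope ring_scope.

Definition harmonic (n : nat) : rat := \sum_(1 <= m < n.+1) (m%:R)^-1.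

(* Main.v *)
Require Import Defs.
From mathcomp Require Import all_boot all_algebra.
From mathcomp Require Import zify ring.
Import GRing.Theory Num.Theory.
Local Open Scope ring_scope.

Lemma harmS m : harmonic m.+1 = harmonic m + (m.+1%:R)^-1.
Proof. by rewrite /harmonic big_nat_recr. Qed.

Lemma harm0 : harmonic 0 = 0.
Proof. by rewrite /harmonic big_geq. Qed.

Lemma alg (c Hx He a b : rat) : a != 0 -> b != 0 -> a + b != 0 ->
 (b * c / a + c) * (Hx + (a+b)^-1 - (He + b^-1)) = b*c/a * (Hx - He) + c * (Hx - (He + b^-1)).
Proof. move=> *; field; by apply/and3P. Qed.

Definition D (x k : nat) : rat := ('C(x, k))%:R * (harmonic x - harmonic (x - k)).

Lemma D0 x : D x 0 = 0.
Proof. by rewrite /D subn0 subrr mulr0. Qed.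

Lemma D_pascal x k : (k < x)%N -> D x.+1 k.+1 = D x k.+1 + D x k.
Proof.
move=> lt; have [e ->] : exists e, x = (k.+1 + e)%N by exists (x - k.+1)%N; lia.
rewrite /D.
have -> : ((k.+1 + e).+1 - k.+1 = e.+1)%N by lia.
have -> : ((k.+1 + e) - k.+1 = e)%N by lia.
have -> : ((k.+1 + e) - k = e.+1)%N by lia.
rewrite binS natrD (harmS (k.+1 + e)) (harmS e).
have h := mul_bin_left (k.+1 + e) k.
have E : ((k.+1 + e) - k = e.+1)%N by lia.
rewrite E in h.
set c := 'C(k.+1 + e, k) in h *.
have -> : ('C(k.+1 + e, k.+1))%:R = (e.+1)%:R * c%:R / (k.+1)%:R :> rat.
  by rewrite -natrM -h natrM mulrC mulKf // pnatr_eq0.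
set Hx := harmonic (k.+1 + e); set He := harmonic e.
have -> : (k.+1 + e).+1%:R = k.+1%:R + e.+1%:R :> rat by rewrite -natrD addnS.
apply: alg; rewrite ?pnatr_eq0 //.
by rewrite -natrD pnatr_eq0 addnS.
Qed.

Lemma vder a b n : (n <= a)%N ->
  \sum_(j < n.+1) D a j * ('C(b, n - j))%:R = D (a + b) n.
Proof.
elim: b n => [|b IH] n le.
  rewrite big_ord_recr /= subnn bin0 mulr1 addn0 big1 ?add0r // => j _.
  by rewrite bin0n subn_eq0 leqNgt ltn_ord mulr0.
case: n le => [|n] le.
  by rewrite big_ord1 !D0 mul0r.
have -> : \sum_(j < n.+2) D a j * ('C(b.+1, n.+1 - j))%:R =
   \sum_(j < n.+2) D a j * ('C(b, n.+1 - j))%:R + \sum_(j < n.+1) D a j * ('C(b, n - j))%:R.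
  rewrite [in LHS]big_ord_recr [X in _ = X + _]big_ord_recr /= subnn !bin0.
  rewrite addrAC; congr (_ + _); rewrite -big_split /=; apply: eq_bigr => j _.
  by rewrite subSn ?binS ?natrD ?mulrDr // -ltnS.
rewrite IH // IH; last by lia.
by rewrite addnS D_pascal //; lia.
Qed.

Definition L (x n : nat) : rat :=
  \sum_(1 <= k < n.+1) (k%:R)^-1 * ('C(x - k, n - k))%:R.

Lemma L_pascal x n : (n < x)%N -> L x.+1 n.+1 = L x n.+1 + L x n.
Proof.
move=> lt; rewrite /L big_nat_recr // [in RHS]big_nat_recr //= subnn !bin0.
rewrite addrAC; congr (_ + _); rewrite -big_split /=; apply: eq_big_nat => k /andP[k1 kn].
rewrite subSn; last by lia.
by rewrite (subSn (m:=k) (n:=n)) 1?binS ?natrD ?mulrDr // -ltnS.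
Qed.

Lemma L0 x : L x 0 = 0.
Proof. by rewrite /L big_geq. Qed.

Lemma LD d n : L (n + d) n = D (n + d) n.
Proof.
elim: d n => [|d IHd] n.
  rewrite /L /D addn0 subnn harm0 subr0 binn mul1r /harmonic.
  by apply: eq_big_nat => k _; rewrite binn mulr1.
elim: n => [|n IHn]; first by rewrite add0n L0 D0.
rewrite addnS L_pascal; last by lia.
rewrite IHd; have -> : (n.+1 + d = n + d.+1)%N by lia.
rewrite IHn -D_pascal //; lia.
Qed.

Lemma swap (f : nat -> rat) N :
  \sum_(1 <= k < N.+1) \sum_(0 <= j < k) ((k - j)%:R)^-1 * f j
  = \sum_(0 <= j < N.+1) f j * harmonic (N - j).
Proof.
elim: N => [|N IH].
  by rewrite big_geq // big_nat1 harm0 mulr0.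
rewrite big_nat_recr // IH [in RHS]big_nat_recr //= subnn harm0 mulr0 addr0.
rewrite -big_split /=; apply: eq_big_nat => j /andP[_ jN].
by rewrite subSn // harmS mulrDr [_ * f j]mulrC.
Qed.

Theorem proposition17 (n : nat) :
  (\sum_(1 <= k < n.+1) \sum_(0 <= j < k)
      ('C(n, j) ^ 2)%:R / (k - j)%:R
    = ('C(2 * n, n))%:R * (2%:R * harmonic n - harmonic (2 * n)) :> rat)
  /\
  (\sum_(1 <= k < n.+1) \sum_(0 <= j < k)
      ((k - j)%:R)^-1 * ('C(n, j))%:R * ('C(2 * n, n + j))%:R
    = ('C(3 * n, n))%:R * harmonic n
      - \sum_(1 <= k < n.+1) (k%:R)^-1 * ('C(3 * n - k, n - k))%:R :> rat).
Proof.
have h3 : (3 * n = n + 2 * n)%N by lia.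
have h2 : (2 * n = n + n)%N by lia.
split.
  under eq_bigr => k _ do under eq_bigr => j _ do rewrite mulrC.
  rewrite (swap (fun j => ('C(n, j) ^ 2)%:R)) big_mkord.
  have E1 : forall j : 'I_n.+1, ('C(n,j)^2)%:R * harmonic (n - j) =
      ('C(n,j)^2)%:R * harmonic n - D n j * ('C(n, n-j))%:R :> rat.
    move=> j; rewrite /D bin_sub ?(leq_ord j) // -mulnn natrM; ring.
  have S2 : \sum_(j < n.+1) ('C(n,j)^2)%:R = ('C(2 * n, n))%:R :> rat.
    rewrite -natr_sum h2 -binomial.Vandermonde; congr (_%:R); apply: eq_bigr => j _.
    by rewrite bin_sub ?(leq_ord j) // mulnn.
  rewrite (eq_bigr _ (fun j _ => E1 j)) sumrB -mulr_suml S2 vder // /D h2 addnK.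
  ring.
under eq_bigr => k _ do under eq_bigr => j _ do rewrite -mulrA.
rewrite (swap (fun j => ('C(n, j))%:R * ('C(2 * n, n + j))%:R)) big_mkord.
have E2 : forall j : 'I_n.+1, ('C(n,j))%:R * ('C(2 * n, n + j))%:R * harmonic (n - j) =
    ('C(n,j))%:R * ('C(2 * n, n + j))%:R * harmonic n - D n j * ('C(2 * n, n-j))%:R :> rat.
  move=> j; rewrite /D -(bin_sub (_ : (n - j <= 2 * n)%N)); last by lia.
  have -> : (2 * n - (n - j) = n + j)%N by have := leq_ord j; lia.
  ring.
have S3 : \sum_(j < n.+1) ('C(n,j))%:R * ('C(2 * n, n + j))%:R = ('C(3 * n, n))%:R :> rat.
  under eq_bigr => j _ do rewrite -natrM.
  rewrite -natr_sum h3 -binomial.Vandermonde; congr (_%:R); apply: eq_bigr => j _.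
  rewrite -(bin_sub (_ : (n - j <= 2 * n)%N)); last by lia.
  by have -> : (2 * n - (n - j) = n + j)%N by have := leq_ord j; lia.
rewrite (eq_bigr _ (fun j _ => E2 j)) sumrB -mulr_suml S3 vder //.
have := LD (2 * n) n; rewrite /L h3 => ->.
ring.
Qed.
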